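(* Let $L>0$, $M\ge1$, $\Delta x=\Delta y=L/M$, and Cartesian cells with centers $(x_j,y_k)=(j\Delta x,k\Delta y)$, $j,k\in\{-M,\dots,M\}$. Let $H\in C^1([0,\infty))$, $V:\mathbb{R}^2\to\mathbb{R}$, and $(W_{p,q})_{p,q=-2M}^{2M}$ real numbers with $W_{-p,-q}=W_{p,q}$. Let $t\mapsto(\overline\rho_{j,k}(t))$ be a differentiable solution on $(0,\infty)$, with $\overline\rho_{j,k}(t)\ge0$, of \[ \frac{d\overline\rho_{j,k}}{dt}=-\frac{F^x_{j+\frac12,k}-F^x_{j-\frac12,k}}{\Delta x}-\frac{F^y_{j,k+\frac12}-F^y_{j,k-\frac12}}{\Delta y},\qquad j,k\in\{-M,\dots,M\}, \] where at each time: slopes are chosen so that the point values $\rho^{\rm E}_{j,k}=\overline\rho_{j,k}+\frac{\Delta x}{2}(\rho_x)_{j,k}$, $\rho^{\rm W}_{j,k}=\overline\rho_{j,k}-\frac{\Delta x}{2}(\rho_x)_{j,k}$, $\rho^{\rm N}_{j,k}=\overline\rho_{j,k}+\frac{\Delta y}{2}(\rho_y)_{j,k}$, $\rho^{\rm S}_{j,k}=\overline\rho_{j,k}-\frac{\Delta y}{2}(\rho_y)_{j,k}$ are nonnegative; $\xi_{j,k}=\Delta x\Delta y\sum_{i,l}W_{j-i,k-l}\overline\rho_{i,l}+H'(\overline\rho_{j,k})+V(x_j,y_k)$; $u_{j+\frac12,k}=-\frac{\xi_{j+1,k}-\xi_{j,k}}{\Delta x}$, $v_{j,k+\frac12}=-\frac{\xi_{j,k+1}-\xi_{j,k}}{\Delta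 y}$ with $u^\pm,v^\pm$ their positive/negative parts ($\max(\cdot,0)$, $\min(\cdot,0)$); $F^x_{j+\frac12,k}=u^+_{j+\frac12,k}\rho^{\rm E}_{j,k}+u^-_{j+\frac12,k}\rho^{\rm W}_{j+1,k}$, $F^y_{j,k+\frac12}=v^+_{j,k+\frac12}\rho^{\rm N}_{j,k}+v^-_{j,k+\frac12}\rho^{\rm S}_{j,k+1}$ at interior interfaces; and the discrete no-flux conditions $F^x_{M+\frac12,k}=F^x_{-M-\frac12,k}=F^y_{j,M+\frac12}=F^y_{j,-M-\frac12}=0$ hold. Define \[ E_\Delta(t)=\Delta x\Delta y\sum_{j,k}\Big[\tfrac12\Delta x\Delta y\sum_{i,l}W_{j-i,k-l}\overline\rho_{i,l}\overline\rho_{j,k}+H(\overline\rho_{j,k})+V(x_j,y_k)\overline\rho_{j,k}\Big], \] \[ I_\Delta(t)=\Delta x\Delta y\sum_{j=-M}^{M-1}\sum_{k=-M}^{M-1}\Big[(u_{j+\frac12,k})^2+(v_{j,k+\frac12})^2\Big]\min\big(\rho^{\rm E}_{j,k},\rho^{\rm W}_{j+1,k},\rho^{\rm N}_{j,k},\rho^{\rm S}_{j,k+1}\big). \] Then $\frac{d}{dt}E_\Delta(t)\le-I_\Delta(t)$ for all $t>0$.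
   Context: This is the two-dimensional semi-discrete finite-volume scheme with no-flux boundary conditions on $[-L,L]^2$ for $\rho_t=\nabla\cdot[\rho\nabla(H'(\rho)+V(\mathbf{x})+W*\rho)]$ with symmetric interaction potential $W$ (so $W_{p,q}\approx W(p\Delta x,q\Delta y)$ is symmetric) and $\rho_0\ge0$; $E_\Delta$ is the discrete free energy. *)

(* Defs.v *)
From Stdlib Require Import Reals ZArith Lia.
From Coquelicot Require Import Coquelicot.
Open Scope R_scope.

Definition sumZ (a b : Z) (f : Z -> R) : R :=
  sum_f_R0 (fun n => f (a + Z.of_nat n)%Z) (Z.to_nat (b - a)).

Definition inrange (M : nat) (j : Z) : Prop :=
  (- Z.of_nat M <= j <= Z.of_nat M)%Z.

Definition dxM (L : R) (M : nat) : R := L / INR M.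

Definition sum2 (M : nat) (f : Z -> Z -> R) : R :=
  sumZ (- Z.of_nat M) (Z.of_nat M) (fun i => sumZ (- Z.of_nat M) (Z.of_nat M) (fun l => f i l)).

Section Scheme.
(* All quantities at a fixed time; rho = cell averages, rx, ry = slopes. *)
Variables (L : R) (M : nat) (dH : R -> R) (V : R -> R -> R) (W : Z -> Z -> R).
Variables (rho rx ry : Z -> Z -> R).

Let dx := dxM L M.

Definition conv (j k : Z) : R :=
  dx * dx * sum2 M (fun i l => W (j - i)%Z (k - l)%Z * rho i l).

Definition xi (j k : Z) : R :=
  conv j k + dH (rho j k) + V (IZR j * dx) (IZR k * dx).

(* u j k = u_{j+1/2,k},  v j k = v_{j,k+1/2} *)
Definition uvel (j k : Z) : R := - (xi (j + 1) k - xi j k) / dx.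
Definition vvel (j k : Z) : R := - (xi j (k + 1) - xi j k) / dx.

Definition rhoE (j k : Z) : R := rho j k + dx / 2 * rx j k.
Definition rhoW (j k : Z) : R := rho j k - dx / 2 * rx j k.
Definition rhoN (j k : Z) : R := rho j k + dx / 2 * ry j k.
Definition rhoS (j k : Z) : R := rho j k - dx / 2 * ry j k.

Definition posp (a : R) : R := Rmax a 0.
Definition negp (a : R) : R := Rmin a 0.

(* Fx j k = F^x_{j+1/2,k}: upwind flux at interior interfaces
   (-M <= j <= M-1), zero (no-flux) at the boundary interfaces. *)
Definition Fx (j k : Z) : R :=
  if andb (- Z.of_nat M <=? j)%Z (j <? Z.of_nat M)%Z
  then posp (uvel j k) * rhoE j k + negp (uvel j k) * rhoW (j + 1) k
  else 0.

(* Fy j k = F^y_{j,k+1/2} *)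
Definition Fy (j k : Z) : R :=
  if andb (- Z.of_nat M <=? k)%Z (k <? Z.of_nat M)%Z
  then posp (vvel j k) * rhoN j k + negp (vvel j k) * rhoS j (k + 1)
  else 0.

Definition rhs (j k : Z) : R :=
  - (Fx j k - Fx (j - 1) k) / dx - (Fy j k - Fy j (k - 1)) / dx.

Definition dissip : R :=
  dx * dx *
  sumZ (- Z.of_nat M) (Z.of_nat M - 1) (fun j =>
  sumZ (- Z.of_nat M) (Z.of_nat M - 1) (fun k =>
    (uvel j k ^ 2 + vvel j k ^ 2) *
    Rmin (Rmin (rhoE j k) (rhoW (j + 1) k)) (Rmin (rhoN j k) (rhoS j (k + 1))))).
End Scheme.

Definition energy (L : R) (M : nat) (H : R -> R) (V : R -> R -> R)
  (W : Z -> Z -> R) (rho : Z -> Z -> R) : R :=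
  dxM L M * dxM L M *
  sum2 M (fun j k =>
    / 2 * (dxM L M * dxM L M * sum2 M (fun i l => W (j - i)%Z (k - l)%Z * rho i l)) * rho j k
    + H (rho j k) + V (IZR j * dxM L M) (IZR k * dxM L M) * rho j k).

(* H in C^1([0,oo)) with derivative dH: one-sided at 0, dH continuous on [0,oo). *)
Definition C1_halfline (H dH : R -> R) : Prop :=
  (forall x, 0 <= x ->
     filterlim (fun y => (H y - H x) / (y - x))
       (within (fun y => 0 <= y /\ y <> x) (locally x)) (locally (dH x)))
  /\ (forall x, 0 <= x ->
     filterlim dH (within (fun y => 0 <= y) (locally x)) (locally (dH x))).

(* Main.v *)
Require Import Defs.
From Stdlib Require Import Reals ZArith.
From Coquelicot Require Import Coquelicot.
From Stdlib Require Import Lia Lra.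
Open Scope R_scope.

Lemma D_plus (f g : R -> R) t a b :
  is_derive f t a -> is_derive g t b -> is_derive (fun s => f s + g s) t (a + b).
Proof. intros; apply (is_derive_plus f g t a b); auto. Qed.

Lemma D_mult (f g : R -> R) t a b :
  is_derive f t a -> is_derive g t b -> is_derive (fun s => f s * g s) t (a * g t + f t * b).
Proof. intros. apply (is_derive_mult f g t a b); auto. intros; apply Rmult_comm. Qed.

Lemma D_const (c : R) t : is_derive (fun _ => c) t 0.
Proof. apply (is_derive_const c t). Qed.

Lemma D_scal (f : R -> R) c t a : is_derive f t a -> is_derive (fun s => c * f s) t (c * a).
Proof. intros H. replace (c*a) with (0 * f t + c * a) by ring.
  apply (D_mult (fun _ => c) f t 0 a). apply D_const. exact H. Qed.

Lemma sum_swap (f : nat -> nat -> R) n m :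
  sum_f_R0 (fun i => sum_f_R0 (fun j => f i j) m) n =
  sum_f_R0 (fun j => sum_f_R0 (fun i => f i j) n) m.
Proof.
  induction n.
  - reflexivity.
  - rewrite tech5, IHn. rewrite <- sum_plus. apply sum_eq. intros. rewrite tech5. reflexivity.
Qed.

Lemma D_sum (f : nat -> R -> R) (df : nat -> R) t N :
  (forall n, (n <= N)%nat -> is_derive (f n) t (df n)) ->
  is_derive (fun s => sum_f_R0 (fun n => f n s) N) t (sum_f_R0 df N).
Proof.
  induction N; intros H.
  - simpl. apply H. lia.
  - rewrite tech5. eapply is_derive_ext. intros s. rewrite tech5. reflexivity.
    apply D_plus. apply IHN. intros; apply H; lia. apply H; lia.
Qed.

Lemma sumZ_ext a b f g : (a <= b)%Z -> (forall x, (a <= x <= b)%Z -> f x = g x) ->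
  sumZ a b f = sumZ a b g.
Proof. intros Hab H. unfold sumZ. apply sum_eq. intros i Hi. apply H. lia. Qed.

Lemma sumZ_ext' a b f g : (forall x, f x = g x) -> sumZ a b f = sumZ a b g.
Proof. intros H. unfold sumZ. apply sum_eq. intros i Hi. apply H. Qed.

Lemma sumZ_plus a b f g : sumZ a b (fun x => f x + g x) = sumZ a b f + sumZ a b g.
Proof. unfold sumZ. apply sum_plus. Qed.

Lemma sumZ_scal a b f c : c * sumZ a b f = sumZ a b (fun x => c * f x).
Proof. unfold sumZ. rewrite scal_sum. apply sum_eq. intros; ring. Qed.

Lemma sumZ_opp a b f : - sumZ a b f = sumZ a b (fun x => - f x).
Proof. replace (- sumZ a b f) with (-1 * sumZ a b f) by ring. rewrite sumZ_scal.
  apply sumZ_ext'. intros; ring. Qed.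

Lemma sumZ_le a b f g : (a <= b)%Z -> (forall x, (a <= x <= b)%Z -> f x <= g x) ->
  sumZ a b f <= sumZ a b g.
Proof. intros Hab H. unfold sumZ. apply sum_Rle. intros i Hi. apply H. lia. Qed.

Lemma sumZ_swap a b c d (f : Z -> Z -> R) :
  sumZ a b (fun i => sumZ c d (fun j => f i j)) = sumZ c d (fun j => sumZ a b (fun i => f i j)).
Proof. unfold sumZ. apply sum_swap. Qed.

Lemma sumZ_last a b f : (a <= b - 1)%Z -> sumZ a b f = sumZ a (b - 1) f + f b.
Proof. intros H. unfold sumZ.
  replace (Z.to_nat (b - a)) with (S (Z.to_nat (b - 1 - a))) by lia.
  rewrite tech5. f_equal. f_equal. lia. Qed.

Lemma D_sumZ (f : Z -> R -> R) (df : Z -> R) t a b : (a <= b)%Z ->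
  (forall x, (a <= x <= b)%Z -> is_derive (f x) t (df x)) ->
  is_derive (fun s => sumZ a b (fun x => f x s)) t (sumZ a b df).
Proof. intros Hab H. unfold sumZ. apply (D_sum (fun n => f (a + Z.of_nat n)%Z)).
  intros n Hn. apply H. lia. Qed.

Lemma sbp_nat (xi g : Z -> R) a m :
  sum_f_R0 (fun n => xi (a + Z.of_nat n)%Z * (g (a + Z.of_nat n)%Z - g (a + Z.of_nat n - 1)%Z)) (S m)
  = xi (a + Z.of_nat (S m))%Z * g (a + Z.of_nat (S m))%Z - xi a * g (a - 1)%Z
    - sum_f_R0 (fun n => (xi (a + Z.of_nat n + 1)%Z - xi (a + Z.of_nat n)%Z) * g (a + Z.of_nat n)%Z) m.
Proof.
  induction m.
  - simpl. replace (a + 0)%Z with a by lia. replace (a + 1 - 1)%Z with a by lia.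
    replace (a+1)%Z with (a + Z.pos 1)%Z by lia. ring.
  - rewrite tech5, IHm. rewrite (tech5 _ m).
    replace (a + Z.of_nat (S (S m)) - 1)%Z with (a + Z.of_nat (S m))%Z by lia.
    replace (a + Z.of_nat m + 1)%Z with (a + Z.of_nat (S m))%Z by lia.
    replace (a + Z.of_nat (S m) + 1)%Z with (a + Z.of_nat (S (S m)))%Z by lia. ring.
Qed.

Lemma sbp (xi g : Z -> R) a b : (a <= b - 1)%Z -> g (a - 1)%Z = 0 -> g b = 0 ->
  sumZ a b (fun x => xi x * (g x - g (x - 1)%Z)) =
  - sumZ a (b - 1) (fun x => (xi (x + 1)%Z - xi x) * g x).
Proof.
  intros H H1 H2. unfold sumZ.
  replace (Z.to_nat (b - a)) with (S (Z.to_nat (b - 1 - a))) by lia.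
  rewrite sbp_nat. replace (a + Z.of_nat (S (Z.to_nat (b - 1 - a))))%Z with b by lia.
  rewrite H1, H2. ring.
Qed.
Lemma chainH (H dH g : R -> R) t r :
  (forall x, 0 <= x ->
     filterlim (fun y => (H y - H x) / (y - x))
       (within (fun y => 0 <= y /\ y <> x) (locally x)) (locally (dH x))) ->
  (forall s, 0 < s -> 0 <= g s) -> 0 < t -> is_derive g t r ->
  is_derive (fun s => H (g s)) t (dH (g t) * r).
Proof.
  intros HC Hpos Ht Hd. apply is_derive_Reals in Hd. apply is_derive_Reals.
  intros eps Heps.
  set (x := g t). set (A := Rabs r + 1). set (B := Rabs (dH x) + 1).
  assert (HA : 0 < A) by (unfold A; pose proof (Rabs_pos r); lra).
  assert (HB : 0 < B) by (unfold B; pose proof (Rabs_pos (dH x)); lra).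
  assert (He1 : 0 < eps / (2 * A)) by (apply Rdiv_lt_0_compat; lra).
  pose proof (HC x (Hpos t Ht) _ (locally_ball (dH x) (mkposreal _ He1))) as L1.
  destruct L1 as [d1 Hd1].
  set (e2 := Rmin 1 (eps / (2 * B))).
  assert (He2 : 0 < e2) by (unfold e2; apply Rmin_pos; [lra| apply Rdiv_lt_0_compat; lra]).
  destruct (Hd e2 He2) as [d2 Hd2].
  assert (Hd1A : 0 < d1 / A) by (apply Rdiv_lt_0_compat; [apply cond_pos|lra]).
  exists (mkposreal _ (Rmin_pos _ _ Ht (Rmin_pos _ _ (cond_pos d2) Hd1A))).
  intros h Hh0 Hh. simpl in Hh.
  assert (Hh1 : Rabs h < t) by (eapply Rlt_le_trans; [exact Hh| apply Rmin_l]).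
  assert (Hh2 : Rabs h < d2) by (eapply Rlt_le_trans; [exact Hh| eapply Rle_trans; [apply Rmin_r| apply Rmin_l]]).
  assert (Hh3 : Rabs h < d1 / A) by (eapply Rlt_le_trans; [exact Hh| eapply Rle_trans; [apply Rmin_r| apply Rmin_r]]).
  specialize (Hd2 h Hh0 Hh2).
  set (y := g (t + h)) in *. fold x in Hd2.
  set (D := (y - x) / h) in *.
  assert (Hy : 0 <= y). { apply Hpos. pose proof (Rabs_def2 _ _ Hh1). lra. }
  assert (He2a : e2 <= 1) by apply Rmin_l.
  assert (He2b : e2 <= eps / (2 * B)) by apply Rmin_r.
  assert (HDr : Rabs D <= A). { unfold A.
    replace D with (r + (D - r)) by ring. eapply Rle_trans. apply Rabs_triang. lra. }
  assert (HdHB : Rabs (dH x) * e2 <= eps / 2). {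
    apply Rle_trans with (B * (eps / (2 * B))).
    apply Rmult_le_compat; try lra. apply Rabs_pos. unfold B; lra.
    right. field. lra. }
  destruct (Req_dec y x) as [Hyx|Hyx].
  - replace ((H y - H x) / h - dH x * r) with (dH x * (D - r) - dH x * D) by
      (unfold D; rewrite Hyx; field; auto).
    replace D with 0 by (unfold D; rewrite Hyx; field; auto).
    replace (dH x * (0 - r) - dH x * 0) with (dH x * (0 - r)) by ring.
    rewrite Rabs_mult. 
    assert (Rabs (dH x) * Rabs (0 - r) <= Rabs (dH x) * e2).
    { apply Rmult_le_compat_l. apply Rabs_pos. replace (0 - r) with (D - r) by (unfold D; rewrite Hyx; field; auto). lra. }
    lra.
  - assert (Hball : Rabs (y - x) < d1).
    { replace (y - x) with (h * D) by (unfold D; field; auto). rewrite Rabs_mult.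
      apply Rle_lt_trans with (Rabs h * A). apply Rmult_le_compat_l; [apply Rabs_pos|lra].
      apply Rmult_lt_reg_r with (/ A). apply Rinv_0_lt_compat; lra.
      replace (Rabs h * A * / A) with (Rabs h) by (field; lra). exact Hh3. }
    specialize (Hd1 y Hball (conj Hy Hyx)). simpl in Hd1.
    change (Rabs ((H y - H x) / (y - x) - dH x) < eps / (2 * A)) in Hd1.
    set (Q := (H y - H x) / (y - x)) in *.
    replace ((H y - H x) / h - dH x * r) with ((Q - dH x) * D + dH x * (D - r))
      by (unfold Q, D; field; split; auto; lra).
    eapply Rle_lt_trans. apply Rabs_triang. rewrite !Rabs_mult.
    assert (Rabs (Q - dH x) * Rabs D <= eps / (2 * A) * A).
    { apply Rmult_le_compat; try apply Rabs_pos; lra. }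
    assert (Rabs (dH x) * Rabs (D - r) <= Rabs (dH x) * e2).
    { apply Rmult_le_compat_l. apply Rabs_pos. lra. }
    replace (eps / (2 * A) * A) with (eps / 2) in * by (field; lra).
    assert (Rabs (dH x) * Rabs (D - r) < eps / 2 \/ Rabs (Q - dH x) * Rabs D < eps/2).
    { destruct (Req_dec (Rabs D) 0) as [E|E].
      - right. rewrite E. lra.
      - right. apply Rlt_le_trans with (eps / (2 * A) * Rabs D).
        apply Rmult_lt_compat_r. pose proof (Rabs_pos D). lra. exact Hd1.
        apply Rle_trans with (eps / (2 * A) * A). apply Rmult_le_compat_l; lra. right; field; lra. }
    lra.
Qed.

Lemma sum2_plus M f g : sum2 M (fun i l => f i l + g i l) = sum2 M f + sum2 M g.
Proof. unfold sum2. rewrite <- sumZ_plus. apply sumZ_ext'. intros. apply sumZ_plus. Qed.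

Lemma sum2_scal M f c : c * sum2 M f = sum2 M (fun i l => c * f i l).
Proof. unfold sum2. rewrite sumZ_scal. apply sumZ_ext'. intros. apply sumZ_scal. Qed.

Lemma sum2_ext M f g : (forall i l, inrange M i -> inrange M l -> f i l = g i l) ->
  sum2 M f = sum2 M g.
Proof. intros H. unfold sum2. apply sumZ_ext. lia. intros. apply sumZ_ext. lia.
  intros. apply H; unfold inrange; lia. Qed.

Lemma sum2_swap M (f : Z -> Z -> Z -> Z -> R) :
  sum2 M (fun j k => sum2 M (fun i l => f j k i l)) =
  sum2 M (fun i l => sum2 M (fun j k => f j k i l)).
Proof. unfold sum2.
  transitivity (sumZ (- Z.of_nat M) (Z.of_nat M) (fun j => sumZ (- Z.of_nat M) (Z.of_nat M) (fun i =>
     sumZ (- Z.of_nat M) (Z.of_nat M) (fun k => sumZ (- Z.of_nat M) (Z.of_nat M) (fun l => f j k i l))))).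
  { apply sumZ_ext'. intros. apply sumZ_swap. }
  rewrite sumZ_swap. apply sumZ_ext'. intros i.
  transitivity (sumZ (- Z.of_nat M) (Z.of_nat M) (fun j => sumZ (- Z.of_nat M) (Z.of_nat M) (fun l =>
     sumZ (- Z.of_nat M) (Z.of_nat M) (fun k => f j k i l)))).
  { apply sumZ_ext'. intros. apply sumZ_swap. }
  apply sumZ_swap.
Qed.

Lemma flux_ineq u a b : 0 <= a -> 0 <= b ->
  u ^ 2 * Rmin a b <= u * (Rmax u 0 * a + Rmin u 0 * b).
Proof. intros Ha Hb. unfold Rmax, Rmin.
  destruct (Rle_dec u 0); destruct (Rle_dec a b); destruct (Rle_dec 0 0); try lra;
  destruct (Rle_dec u 0); try lra; nra. Qed.

Lemma sumZ_nonneg a b f : (a <= b)%Z -> (forall x, (a <= x <= b)%Z -> 0 <= f x) -> 0 <= sumZ a b f.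
Proof. intros Hab H. apply Rle_trans with (sumZ a b (fun _ => 0)).
  unfold sumZ. rewrite sum_cte. lra. apply sumZ_le; auto. Qed.

Theorem theorem2p4 (L : R) (M : nat) (H dH : R -> R) (V : R -> R -> R)
  (W : Z -> Z -> R) (rho rx ry : R -> Z -> Z -> R) :
  0 < L -> (1 <= M)%nat ->
  C1_halfline H dH ->
  (forall p q : Z, (- 2 * Z.of_nat M <= p <= 2 * Z.of_nat M)%Z ->
     (- 2 * Z.of_nat M <= q <= 2 * Z.of_nat M)%Z -> W (- p)%Z (- q)%Z = W p q) ->
  (forall t j k, 0 < t -> inrange M j -> inrange M k -> 0 <= rho t j k) ->
  (forall t j k, 0 < t -> inrange M j -> inrange M k ->
     0 <= rhoE L M (rho t) (rx t) j k /\ 0 <= rhoW L M (rho t) (rx t) j k /\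
     0 <= rhoN L M (rho t) (ry t) j k /\ 0 <= rhoS L M (rho t) (ry t) j k) ->
  (forall t j k, 0 < t -> inrange M j -> inrange M k ->
     is_derive (fun s => rho s j k) t (rhs L M dH V W (rho t) (rx t) (ry t) j k)) ->
  forall t, 0 < t ->
    exists d, is_derive (fun s => energy L M H V W (rho s)) t d /\
              d <= - dissip L M dH V W (rho t) (rx t) (ry t).
Proof.
  intros HL HM [HC _] HW Hpos Hrec Hder t Ht.
  set (dx := dxM L M).
  assert (Hdx : 0 < dx). { unfold dx, dxM. apply Rdiv_lt_0_compat; auto. apply lt_0_INR; lia. }
  set (c := dx * dx).
  set (m := Z.of_nat M).
  set (r := rhs L M dH V W (rho t) (rx t) (ry t)).
  set (S := fun j k => sum2 M (fun i l => W (j - i)%Z (k - l)%Z * rho t i l)).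
  set (S' := fun j k => sum2 M (fun i l => W (j - i)%Z (k - l)%Z * r i l)).
  assert (HS : forall j k, is_derive (fun s => sum2 M (fun i l => W (j - i)%Z (k - l)%Z * rho s i l)) t (S' j k)).
  { intros j k. unfold S', sum2. apply D_sumZ. lia. intros i Hi. apply D_sumZ. lia. intros l Hl.
    apply D_scal. apply Hder; auto; unfold inrange; lia. }
  exists (c * sum2 M (fun j k => (/2 * (c * S' j k) * rho t j k + /2 * (c * S j k) * r j k)
                                 + dH (rho t j k) * r j k + V (IZR j * dx) (IZR k * dx) * r j k)).
  split.
  { unfold energy. fold dx. apply D_scal. unfold sum2. apply D_sumZ. lia. intros j Hj. apply D_sumZ. lia.
    intros k Hk. 
    assert (Hr : is_derive (fun s => rho s j k) t (r j k)) by (apply Hder; auto; unfold inrange; lia).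
    apply D_plus. apply D_plus.
    - apply (D_mult (fun s => / 2 * (dx * dx * sum2 M (fun i l => W (j - i)%Z (k - l)%Z * rho s i l)))
          (fun s => rho s j k)).
      apply D_scal. apply D_scal. apply HS. exact Hr.
    - apply chainH. exact HC. intros s Hs; apply Hpos; auto; unfold inrange; lia. exact Ht. exact Hr.
    - apply D_scal. exact Hr. }
  assert (Sym : sum2 M (fun j k => S' j k * rho t j k) = sum2 M (fun j k => S j k * r j k)).
  { transitivity (sum2 M (fun j k => sum2 M (fun i l => W (j - i)%Z (k - l)%Z * r i l * rho t j k))).
    { apply sum2_ext. intros j k _ _. unfold S'. rewrite Rmult_comm, sum2_scal.
      apply sum2_ext; intros; ring. }
    rewrite sum2_swap. symmetry. apply sum2_ext. intros i l Hi Hl. unfold S.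
    rewrite Rmult_comm, sum2_scal. apply sum2_ext. intros j k Hj Hk. unfold inrange in *.
    rewrite <- (HW (i - j)%Z (l - k)%Z) by lia.
    replace (- (i - j))%Z with (j - i)%Z by lia. replace (- (l - k))%Z with (k - l)%Z by lia. ring. }
  set (xi' := xi L M dH V W (rho t)).
  assert (E1 : sum2 M (fun j k => (/2 * (c * S' j k) * rho t j k + /2 * (c * S j k) * r j k)
                                 + dH (rho t j k) * r j k + V (IZR j * dx) (IZR k * dx) * r j k)
              = sum2 M (fun j k => xi' j k * r j k)).
  { transitivity (sum2 M (fun j k => (/2 * c) * (S' j k * rho t j k) + ((/2 * c) * (S j k * r j k)
                     + (dH (rho t j k) + V (IZR j * dx) (IZR k * dx)) * r j k))).
    { apply sum2_ext; intros; ring. }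
    rewrite sum2_plus, sum2_plus, <- !sum2_scal, Sym.
    transitivity (sum2 M (fun j k => c * (S j k * r j k)
                     + (dH (rho t j k) + V (IZR j * dx) (IZR k * dx)) * r j k)).
    { rewrite sum2_plus, <- sum2_scal. lra. }
    apply sum2_ext; intros j k _ _. unfold xi', xi, conv. change (dxM L M) with dx. fold c.
    unfold S. ring. }
  rewrite E1.
  set (Fx' := Fx L M dH V W (rho t) (rx t)).
  set (Fy' := Fy L M dH V W (rho t) (ry t)).
  set (u := uvel L M dH V W (rho t)).
  set (v := vvel L M dH V W (rho t)).
  assert (Fx0 : forall k, Fx' (- m - 1)%Z k = 0).
  { intros k. unfold Fx', Fx. fold m. destruct (Z.leb_spec (- m) (- m - 1)); [lia|reflexivity]. }
  assert (Fx1 : forall k, Fx' m k = 0).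
  { intros k. unfold Fx', Fx. fold m. destruct (Z.leb_spec (- m) m); destruct (Z.ltb_spec m m); try lia; reflexivity. }
  assert (Fy0 : forall j, Fy' j (- m - 1)%Z = 0).
  { intros k. unfold Fy', Fy. fold m. destruct (Z.leb_spec (- m) (- m - 1)); [lia|reflexivity]. }
  assert (Fy1 : forall j, Fy' j m = 0).
  { intros k. unfold Fy', Fy. fold m. destruct (Z.leb_spec (- m) m); destruct (Z.ltb_spec m m); try lia; reflexivity. }
  set (X := sumZ (- m) m (fun k => sumZ (- m) (m - 1) (fun j => u j k * Fx' j k))).
  set (Y := sumZ (- m) m (fun j => sumZ (- m) (m - 1) (fun k => v j k * Fy' j k))).
  assert (PX : sum2 M (fun j k => xi' j k * (Fx' j k - Fx' (j - 1)%Z k)) = dx * X).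
  { unfold sum2. fold m. rewrite sumZ_swap. unfold X. rewrite sumZ_scal.
    apply sumZ_ext. lia. intros k Hk.
    rewrite (sbp (fun j => xi' j k) (fun j => Fx' j k)) by (auto; lia).
    rewrite sumZ_opp, sumZ_scal. apply sumZ_ext'. intros j. unfold u, uvel. fold xi'.
    change (dxM L M) with dx. field. lra. }
  assert (PY : sum2 M (fun j k => xi' j k * (Fy' j k - Fy' j (k - 1)%Z)) = dx * Y).
  { unfold sum2. fold m. unfold Y. rewrite sumZ_scal.
    apply sumZ_ext. lia. intros j Hj.
    rewrite (sbp (fun k => xi' j k) (fun k => Fy' j k)) by (auto; lia).
    rewrite sumZ_opp, sumZ_scal. apply sumZ_ext'. intros k. unfold v, vvel. fold xi'.
    change (dxM L M) with dx. field. lra. }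
  assert (E2 : sum2 M (fun j k => xi' j k * r j k) = - X - Y).
  { transitivity (sum2 M (fun j k => (- / dx) * (xi' j k * (Fx' j k - Fx' (j - 1)%Z k))
                              + (- / dx) * (xi' j k * (Fy' j k - Fy' j (k - 1)%Z)))).
    { apply sum2_ext. intros j k _ _. unfold r, rhs. fold Fx' Fy'. change (dxM L M) with dx.
      field. lra. }
    rewrite sum2_plus, <- !sum2_scal, PX, PY. field. lra. }
  rewrite E2.
  set (rE := rhoE L M (rho t) (rx t)). set (rW := rhoW L M (rho t) (rx t)).
  set (rN := rhoN L M (rho t) (ry t)). set (rS := rhoS L M (rho t) (ry t)).
  assert (HFx : forall j k, (- m <= j <= m - 1)%Z -> (- m <= k <= m)%Z ->
     u j k ^ 2 * Rmin (rE j k) (rW (j + 1)%Z k) <= u j k * Fx' j k).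
  { intros j k Hj Hk. unfold Fx', Fx. fold m.
    destruct (Z.leb_spec (- m) j); [|lia]. destruct (Z.ltb_spec j m); [|lia]. simpl.
    fold u. fold rE rW. unfold posp, negp. apply flux_ineq.
    apply (Hrec t j k); auto; unfold inrange; lia.
    apply (Hrec t (j+1)%Z k); auto; unfold inrange; lia. }
  assert (HFy : forall j k, (- m <= j <= m)%Z -> (- m <= k <= m - 1)%Z ->
     v j k ^ 2 * Rmin (rN j k) (rS j (k + 1)%Z) <= v j k * Fy' j k).
  { intros j k Hj Hk. unfold Fy', Fy. fold m.
    destruct (Z.leb_spec (- m) k); [|lia]. destruct (Z.ltb_spec k m); [|lia]. simpl.
    fold v. fold rN rS. unfold posp, negp. apply flux_ineq.
    apply (Hrec t j k); auto; unfold inrange; lia.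
    apply (Hrec t j (k+1)%Z); auto; unfold inrange; lia. }
  assert (Hmin2 : forall a b, 0 <= a -> 0 <= b -> 0 <= Rmin a b).
  { intros a b Ha Hb. unfold Rmin. destruct (Rle_dec a b); lra. }
  assert (HX : X = sumZ (- m) (m - 1) (fun j => sumZ (- m) (m - 1) (fun k => u j k * Fx' j k))
                   + sumZ (- m) (m - 1) (fun j => u j m * Fx' j m)).
  { unfold X. rewrite sumZ_swap, <- sumZ_plus. apply sumZ_ext'. intros j.
    apply sumZ_last. lia. }
  assert (HY : Y = sumZ (- m) (m - 1) (fun j => sumZ (- m) (m - 1) (fun k => v j k * Fy' j k))
                   + sumZ (- m) (m - 1) (fun k => v m k * Fy' m k)).
  { unfold Y. apply sumZ_last. lia. }
  assert (N1 : 0 <= sumZ (- m) (m - 1) (fun j => u j m * Fx' j m)).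
  { apply sumZ_nonneg. lia. intros j Hj. eapply Rle_trans; [|apply HFx; lia].
    apply Rmult_le_pos. apply pow2_ge_0. apply Hmin2.
    apply (Hrec t j m); auto; unfold inrange; lia.
    apply (Hrec t (j+1)%Z m); auto; unfold inrange; lia. }
  assert (N2 : 0 <= sumZ (- m) (m - 1) (fun k => v m k * Fy' m k)).
  { apply sumZ_nonneg. lia. intros k Hk. eapply Rle_trans; [|apply HFy; lia].
    apply Rmult_le_pos. apply pow2_ge_0. apply Hmin2.
    apply (Hrec t m k); auto; unfold inrange; lia.
    apply (Hrec t m (k+1)%Z); auto; unfold inrange; lia. }
  set (D := sumZ (- m) (m - 1) (fun j => sumZ (- m) (m - 1) (fun k =>
        (u j k ^ 2 + v j k ^ 2) * Rmin (Rmin (rE j k) (rW (j + 1)%Z k)) (Rmin (rN j k) (rS j (k + 1)%Z))))).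
  assert (HD : D <= sumZ (- m) (m - 1) (fun j => sumZ (- m) (m - 1) (fun k => u j k * Fx' j k))
                 + sumZ (- m) (m - 1) (fun j => sumZ (- m) (m - 1) (fun k => v j k * Fy' j k))).
  { rewrite <- sumZ_plus. apply sumZ_le. lia. intros j Hj. rewrite <- sumZ_plus. apply sumZ_le. lia.
    intros k Hk. rewrite Rmult_plus_distr_r. apply Rplus_le_compat.
    - eapply Rle_trans; [|apply HFx; lia]. apply Rmult_le_compat_l. apply pow2_ge_0. apply Rmin_l.
    - eapply Rle_trans; [|apply HFy; lia]. apply Rmult_le_compat_l. apply pow2_ge_0. apply Rmin_r. }
  assert (Hdis : dissip L M dH V W (rho t) (rx t) (ry t) = c * D).
  { reflexivity. }
  rewrite Hdis. assert (0 < c) by (unfold c; nra). nra.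
Qed.
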